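(* Let $f\colon M^n\to\mathbb{S}^{n+m}$ be an isometric immersion, $x\in M^n$, and $k$ an integer with $2\leq k\leq n/2$, and assume that $\mathrm{Ric}_M(X)\geq b(n,k,H(x))$ for every unit $X\in T_xM$, where $b(n,k,H)=\frac{n(k-1)}{k}+\frac{n(k-1)H}{2k^2}\big(nH+\sqrt{n^2H^2+4k(n-k)}\big)$. Let $$\lambda(n,k,H)=\frac{1}{2k}\big(nH+\sqrt{n^2H^2+4k(n-k)}\big),\qquad \mu(n,k,H)=\frac{1}{2k}\big(n(2k-1)H-\sqrt{n^2H^2+4k(n-k)}\big).$$ Then: (i) If $H(x)\neq 0$, the shape operator $A_1$ of $f$ at $x$ in the direction $\xi_1=\mathcal H(x)/H(x)$ satisfies $\mu(n,k,H(x))\leq\langle A_1X,X\rangle\leq\lambda(n,k,H(x))$ for every unit $X\in T_xM$. (ii) If $H(x)=0$, then for every unit normal vector $\xi\in N_fM(x)$ the shape operator $A_\xi$ satisfies $\mu(n,k,0)\leq\langle A_\xi X,X\rangle\leq\lambda(n,k,0)$ for every unit $X\in T_xM$.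
   Context: $\mathbb{S}^{n+m}$ is the unit sphere; $\mathcal H=\frac1n\mathrm{tr}\,\alpha_f$ is the normalized mean curvature vector of $f$ ($\alpha_f$ its second fundamental form), $H=\|\mathcal H\|$, $A_\xi$ the shape operator in the normal direction $\xi$, and $\mathrm{Ric}_M(X)$ the non-normalized Ricci curvature in the unit direction $X$. *)

(* Defs.v *)
From HB Require Import structures.
From mathcomp Require Import all_boot all_order all_algebra.
From mathcomp Require Import reals.
Set Implicit Arguments. Unset Strict Implicit. Unset Printing Implicit Defensive.
Import Order.TTheory GRing.Theory Num.Theory.
Local Open Scope ring_scope.

(* Pointwise model of an isometric immersion f : M^n -> S^{n+m} at a point x:
   T_xM is identified with 'rV_n via an orthonormal frame e_0..e_{n-1},
   N_fM(x) with 'rV_m via an orthonormal normal frame.  The second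
   fundamental form alpha_f at x is given by its (symmetric) values
   alpha i j = alpha_f(e_i, e_j) in the normal space. *)

Section Defs.
Variable R : realType.

Definition dotv (p : nat) (u v : 'rV[R]_p) : R := (u *m v^T) 0 0.

Definition unitv (p : nat) (u : 'rV[R]_p) : Prop := dotv u u = 1.

Definition basisv (n : nat) (i : 'I_n) : 'rV[R]_n := \row_j (i == j)%:R.

Definition sff (n m : nat) (alpha : 'I_n -> 'I_n -> 'rV[R]_m)
  (X Y : 'rV[R]_n) : 'rV[R]_m :=
  \sum_(i < n) \sum_(j < n) (X 0 i * Y 0 j) *: alpha i j.

Definition meancurv (n m : nat) (alpha : 'I_n -> 'I_n -> 'rV[R]_m) : 'rV[R]_m :=
  n%:R^-1 *: \sum_(i < n) alpha i i.

Definition Hnorm (n m : nat) (alpha : 'I_n -> 'I_n -> 'rV[R]_m) : R :=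
  Num.sqrt (dotv (meancurv alpha) (meancurv alpha)).

(* shape operator A_xi, as a matrix in the frame: <A_xi e_i, e_j> = <alpha(e_i,e_j), xi> *)
Definition shapeop (n m : nat) (alpha : 'I_n -> 'I_n -> 'rV[R]_m) (xi : 'rV[R]_m)
  : 'M[R]_n := \matrix_(i, j) dotv (alpha i j) xi.

(* Riemann curvature tensor of M at x given by the Gauss equation for
   submanifolds of the unit sphere (ambient curvature 1):
   R(X,Y,Z,W) = <X,W><Y,Z> - <X,Z><Y,W> + <alpha(X,W),alpha(Y,Z)> - <alpha(X,Z),alpha(Y,W)> *)
Definition curv4 (n m : nat) (alpha : 'I_n -> 'I_n -> 'rV[R]_m)
  (X Y Z W : 'rV[R]_n) : R :=
  dotv X W * dotv Y Z - dotv X Z * dotv Y W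
  + dotv (sff alpha X W) (sff alpha Y Z) - dotv (sff alpha X Z) (sff alpha Y W).

(* non-normalized Ricci curvature Ric_M(X) = sum_i R(X,e_i,e_i,X) *)
Definition Ric (n m : nat) (alpha : 'I_n -> 'I_n -> 'rV[R]_m) (X : 'rV[R]_n) : R :=
  \sum_(i < n) curv4 alpha X (basisv i) (basisv i) X.

Definition sqrtD (n k : nat) (H : R) : R :=
  Num.sqrt (n%:R ^+ 2 * H ^+ 2 + 4 * k%:R * (n%:R - k%:R)).

Definition bnk (n k : nat) (H : R) : R :=
  n%:R * (k%:R - 1) / k%:R
  + n%:R * (k%:R - 1) * H / (2 * k%:R ^+ 2) * (n%:R * H + sqrtD n k H).

Definition lambdank (n k : nat) (H : R) : R :=
  (2 * k%:R)^-1 * (n%:R * H + sqrtD n k H).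

Definition munk (n k : nat) (H : R) : R :=
  (2 * k%:R)^-1 * (n%:R * (2 * k%:R - 1) * H - sqrtD n k H).

End Defs.

(* Main.v *)
Require Import Defs.
From HB Require Import structures.
From mathcomp Require Import all_boot all_order all_algebra.
From mathcomp Require Import reals.
From mathcomp Require Import ring lra.
Import Order.TTheory GRing.Theory Num.Theory.
Set Implicit Arguments. Unset Strict Implicit.
Local Open Scope ring_scope.

Lemma lm_prod (R : realType) (n k : nat) (h : R) :
  (2 <= k)%N -> (2 * k <= n)%N ->
  lambdank n k h * munk n k h = bnk n k h - (n%:R - 1).
Proof.
move=> hk hn.
have kR : (2:R) <= k%:R by rewrite (ler_nat R 2 k).
have nR : 2 * k%:R <= n%:R :> R by rewrite -natrM ler_nat.
have hS : sqrtD n k h ^+ 2 = n%:R ^+ 2 * h ^+ 2 + 4 * k%:R * (n%:R - k%:R).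
  rewrite /sqrtD sqr_sqrtr //; apply: addr_ge0; first by rewrite mulr_ge0 ?sqr_ge0.
  apply: mulr_ge0; [lra|lra].
rewrite /lambdank /munk /bnk.
set S := sqrtD n k h; set K := k%:R; set N := n%:R.
have K0 : K != 0 by rewrite /K; apply/eqP; lra.
apply: (@mulfI _ (4 * K^+2)); first by rewrite mulf_neq0 // ?expf_neq0 //; apply/eqP; lra.
have -> : 4 * K ^+ 2 * ((2 * K)^-1 * (N * h + S) * ((2 * K)^-1 * (N * (2 * K - 1) * h - S)))
   = (N * h + S) * (N * (2 * K - 1) * h - S) by field.
have -> : 4 * K ^+ 2 * (N * (K - 1) / K + N * (K - 1) * h / (2 * K ^+ 2) * (N * h + S) - (N - 1))
   = 4 * K * N * (K-1) + 2 * N * (K-1) * h * (N * h + S) - 4 * K^+2 * (N - 1) by field.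
have -> : (N * h + S) * (N * (2 * K - 1) * h - S) = N^+2 * (2*K-1) * h^+2 + N * (2*K-2) * h * S - S^+2 by ring.
rewrite hS; ring.
Qed.

Lemma lm_sum (R : realType) (n k : nat) (h : R) :
  (2 <= k)%N -> lambdank n k h + munk n k h = n%:R * h.
Proof.
move=> hk; have kR : (2:R) <= k%:R by rewrite (ler_nat R 2 k).
rewrite /lambdank /munk; field; apply/eqP; lra.
Qed.

Lemma alg_prod (R : realType) (n k : nat) (h a : R) :
  (2 <= k)%N -> (2 * k <= n)%N ->
  bnk n k h <= n%:R - 1 + n%:R * h * a - a ^+ 2 ->
  (a - lambdank n k h) * (a - munk n k h) <= 0.
Proof.
move=> hk hn hb.
have e : (a - lambdank n k h) * (a - munk n k h) =
  a ^+ 2 - (lambdank n k h + munk n k h) * a + lambdank n k h * munk n k h by ring.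
rewrite e lm_sum // lm_prod //; lra.
Qed.

Lemma lam_gt (R : realType) (n k : nat) (h : R) :
  (2 <= k)%N -> (2 * k <= n)%N -> 0 <= h -> h < lambdank n k h.
Proof.
move=> hk hn h0.
have kR : (2:R) <= k%:R by rewrite (ler_nat R 2 k).
have nR : 2 * k%:R <= n%:R :> R by rewrite -natrM ler_nat.
have S0 : 0 < sqrtD n k h.
  rewrite /sqrtD sqrtr_gt0; apply: ltr_wpDl; first by rewrite mulr_ge0 ?sqr_ge0.
  apply: mulr_gt0; [lra|lra].
rewrite /lambdank.
have e : h = (2 * k%:R)^-1 * (2 * k%:R * h) by field; apply/eqP; lra.
rewrite [X in X < _]e.
rewrite ltr_pM2l; last by rewrite invr_gt0; lra.
have : 0 <= (n%:R - 2 * k%:R) * h by apply: mulr_ge0 => //; lra.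
lra.
Qed.

Section G.
Variable R : realType.

Lemma dotvE p (u v : 'rV[R]_p) : dotv u v = \sum_k u 0 k * v 0 k.
Proof. rewrite /dotv mxE; apply: eq_bigr => k _; by rewrite mxE. Qed.

Lemma dotvC p (u v : 'rV[R]_p) : dotv u v = dotv v u.
Proof. rewrite !dotvE; apply: eq_bigr => k _; exact: mulrC. Qed.

Lemma dotv_ge0 p (u : 'rV[R]_p) : 0 <= dotv u u.
Proof. rewrite dotvE; apply: sumr_ge0 => k _; by rewrite -expr2 sqr_ge0. Qed.

Lemma dotv_suml p I (r : seq I) (P : pred I) (F : I -> 'rV[R]_p) v :
  dotv (\sum_(i <- r | P i) F i) v = \sum_(i <- r | P i) dotv (F i) v.
Proof. by rewrite /dotv mulmx_suml summxE. Qed.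

Lemma dotv_sumr p I (r : seq I) (P : pred I) (F : I -> 'rV[R]_p) v :
  dotv v (\sum_(i <- r | P i) F i) = \sum_(i <- r | P i) dotv v (F i).
Proof. rewrite dotvC dotv_suml; apply: eq_bigr => i _; exact: dotvC. Qed.

Lemma dotvZl p a (u v : 'rV[R]_p) : dotv (a *: u) v = a * dotv u v.
Proof. by rewrite /dotv -scalemxAl mxE. Qed.

Lemma dotvZr p a (u v : 'rV[R]_p) : dotv v (a *: u) = a * dotv v u.
Proof. by rewrite dotvC dotvZl dotvC. Qed.

Lemma dotv0r p (u : 'rV[R]_p) : dotv u 0 = 0.
Proof. by rewrite dotvE big1 // => k _; rewrite mxE mulr0. Qed.

Lemma sum_delta p (F : 'I_p -> R) i : \sum_j F j * (i == j)%:R = F i.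
Proof.
rewrite (bigD1 i) //= eqxx mulr1 big1 ?addr0 // => j /negPf.
by rewrite eq_sym => ->; rewrite mulr0.
Qed.

Lemma dotv_basis p (X : 'rV[R]_p) i : dotv X (basisv R i) = X 0 i.
Proof. rewrite dotvE -[RHS](sum_delta (fun j => X 0 j) i); apply: eq_bigr => j _; by rewrite mxE. Qed.

Lemma dotv_basis_basis p (i : 'I_p) : dotv (basisv R i) (basisv R i) = 1.
Proof. by rewrite dotv_basis mxE eqxx. Qed.

Lemma cs_unit p (u v : 'rV[R]_p) : unitv v -> dotv u v ^+ 2 <= dotv u u.
Proof.
rewrite /unitv => hv.
set t := dotv u v.
have : 0 <= \sum_k (u 0 k - t * v 0 k) ^+ 2 by apply: sumr_ge0 => k _; exact: sqr_ge0.
have -> : \sum_k (u 0 k - t * v 0 k) ^+ 2 =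
   \sum_k u 0 k * u 0 k - 2 * t * \sum_k u 0 k * v 0 k + t ^+ 2 * \sum_k v 0 k * v 0 k.
  rewrite !mulr_sumr -sumrB -big_split; apply: eq_bigr => k _ /=; ring.
rewrite -!dotvE hv -/t; lra.
Qed.

Variables (n m : nat) (alpha : 'I_n -> 'I_n -> 'rV[R]_m).
Hypothesis alpha_sym : forall i j, alpha i j = alpha j i.

Lemma dotv_sff X Y v :
  dotv (sff alpha X Y) v = \sum_i \sum_j X 0 i * Y 0 j * dotv (alpha i j) v.
Proof.
rewrite /sff dotv_suml; apply: eq_bigr => i _; rewrite dotv_suml.
by apply: eq_bigr => j _; rewrite dotvZl.
Qed.

Lemma sffC X Y : sff alpha X Y = sff alpha Y X.
Proof.
rewrite /sff exchange_big; apply: eq_bigr => i _; apply: eq_bigr => j _.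
by rewrite alpha_sym mulrC.
Qed.

Lemma sff_basis i : sff alpha (basisv R i) (basisv R i) = alpha i i.
Proof.
rewrite /sff (bigD1 i) //= [X in _ + X]big1 ?addr0; last first.
  move=> j /negPf hj; rewrite big1 // => l _; rewrite !mxE eq_sym hj mul0r scale0r //.
rewrite (bigD1 i) //= [X in _ + X]big1 ?addr0; last first.
  move=> j /negPf hj; rewrite !mxE eq_sym hj mulr0 scale0r //.
by rewrite !mxE eqxx mulr1 scale1r.
Qed.

Definition aq (X : 'rV[R]_n) xi := dotv (X *m shapeop alpha xi) X.

Lemma aqE X xi : aq X xi = dotv (sff alpha X X) xi.
Proof.
rewrite /aq dotv_sff dotvE; apply: eq_bigr => i _.
rewrite !mxE mulr_suml; apply: eq_bigr => j _; rewrite !mxE alpha_sym; ring.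
Qed.

Lemma Ric_eq X : unitv X ->
  Ric alpha X = (n%:R - 1) + dotv (sff alpha X X) (\sum_i alpha i i)
     - \sum_i dotv (sff alpha X (basisv R i)) (sff alpha X (basisv R i)).
Proof.
rewrite /unitv => hX.
rewrite /Ric /curv4 sumrB big_split sumrB /=.
rewrite dotv_sumr.
congr (_ + _ - _); last first.
  by apply: eq_bigr => i _; rewrite (sffC (basisv R i) X).
  by apply: eq_bigr => i _; rewrite sff_basis.
rewrite hX.
under eq_bigr do rewrite dotv_basis_basis mulr1.
under [X in _ - X]eq_bigr do rewrite dotv_basis dotvC dotv_basis.
rewrite sumr_const card_ord -dotvE hX.
done.
Qed.

Lemma Ric_le X xi : unitv X -> unitv xi ->
  Ric alpha X <= (n%:R - 1) + dotv (sff alpha X X) (\sum_i alpha i i) - aq X xi ^+ 2.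
Proof.
move=> hX hxi; rewrite Ric_eq //; apply: lerB => //.
set c := fun i => dotv (sff alpha X (basisv R i)) xi.
apply: (@le_trans _ _ (\sum_i c i ^+ 2)); last first.
  by apply: ler_sum => i _; apply: cs_unit.
have -> : aq X xi = dotv (\row_i c i) X.
  rewrite /aq !dotvE; apply: eq_bigr => k _; rewrite !mxE /c dotv_sff.
  congr (_ * _); apply: eq_bigr => j _.
  rewrite mxE.
  rewrite -(sum_delta (fun l => X 0 j * dotv (alpha j l) xi) k).
  apply: eq_bigr => l _; rewrite mxE; ring.
apply: (le_trans (cs_unit _ hX)); rewrite dotvE; apply: ler_sum => i _.
by rewrite !mxE expr2.
Qed.

End G.

Theorem lemma6 (R : realType) (n m k : nat)
  (alpha : 'I_n -> 'I_n -> 'rV[R]_m)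
  (alpha_sym : forall i j, alpha i j = alpha j i)
  (hk2 : (2 <= k)%N) (hkn : (2 * k <= n)%N)
  (hRic : forall X : 'rV[R]_n, unitv X ->
     bnk n k (Hnorm alpha) <= Ric alpha X) :
  (Hnorm alpha != 0 ->
     forall X : 'rV[R]_n, unitv X ->
       munk n k (Hnorm alpha)
         <= dotv (X *m shapeop alpha ((Hnorm alpha)^-1 *: meancurv alpha)) X
       /\ dotv (X *m shapeop alpha ((Hnorm alpha)^-1 *: meancurv alpha)) X
         <= lambdank n k (Hnorm alpha))
  /\
  (Hnorm alpha = 0 ->
     forall (xi : 'rV[R]_m), unitv xi ->
     forall X : 'rV[R]_n, unitv X ->
       munk n k 0 <= dotv (X *m shapeop alpha xi) X
       /\ dotv (X *m shapeop alpha xi) X <= lambdank n k 0).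

Proof.
set h := Hnorm alpha in hRic *; set mc := meancurv alpha.
have n0 : (n%:R : R) != 0.
  rewrite pnatr_eq0 -lt0n; apply: leq_trans hkn; by rewrite muln_gt0 (leq_trans _ hk2).
have h0 : 0 <= h by rewrite /h /Hnorm sqrtr_ge0.
have hh : h ^+ 2 = dotv mc mc by rewrite /h /Hnorm sqr_sqrtr // dotv_ge0.
have hsum : \sum_i alpha i i = n%:R *: mc.
  by rewrite /mc /meancurv scalerA mulfV // scale1r.
split.
- move=> hn0.
  set xi := h^-1 *: mc.
  have hxi : unitv xi.
    rewrite /unitv /xi dotvZl dotvZr -hh; field; exact: hn0.
  have hmc : \sum_i alpha i i = (n%:R * h) *: xi.
    by rewrite /xi scalerA -mulrA mulfV // mulr1 hsum.
  have key : forall X, unitv X ->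
      (aq alpha X xi - lambdank n k h) * (aq alpha X xi - munk n k h) <= 0.
    move=> X hX; apply: alg_prod => //.
    apply: (le_trans (hRic _ hX)); apply: (le_trans (Ric_le alpha_sym hX hxi)).
    rewrite hmc dotvZr -aqE //.
  have hml : munk n k h <= lambdank n k h.
    rewrite leNgt; apply/negP => hlt.
    have hi : forall i, lambdank n k h <= aq alpha (basisv R i) xi.
      move=> i; have := key _ (dotv_basis_basis R i); nra.
    have : \sum_(i < n) aq alpha (basisv R i) xi = n%:R * h.
      under eq_bigr do rewrite aqE // sff_basis //.
      by rewrite -dotv_suml hmc dotvZl hxi mulr1.
    have : \sum_(i < n) lambdank n k h <= \sum_(i < n) aq alpha (basisv R i) xi.
      by apply: ler_sum => i _.
    rewrite sumr_const card_ord => hle heq.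
    have := lam_gt hk2 hkn h0.
    rewrite heq -mulr_natl in hle.
    have nR : (0:R) < n%:R by rewrite lt0r n0 ler0n.
    nra.
  move=> X hX; have := key _ hX; rewrite /aq => hk; split; nra.
- move=> hz xi hxi X hX.
  have hmc : mc = 0.
    have d0 : dotv mc mc = 0 by rewrite -hh -/h hz expr0n.
    apply/matrixP => i j; rewrite (ord1 i) [RHS]mxE.
    move: d0; rewrite dotvE => /psumr_eq0P hp.
    have := hp (fun i0 _ => ltac:(by rewrite -expr2 sqr_ge0)) j isT.
    by move/eqP; rewrite mulf_eq0 orbb => /eqP.
  have key : (aq alpha X xi - lambdank n k 0) * (aq alpha X xi - munk n k 0) <= 0.
    apply: alg_prod => //.
    have hb := hRic _ hX; rewrite hz in hb; apply: (le_trans hb).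
    apply: (le_trans (Ric_le alpha_sym hX hxi)).
    by rewrite hsum hmc scaler0 dotv0r mulr0 mul0r.
  have hml : munk n k (0:R) <= lambdank n k 0.
    have kR : (2:R) <= k%:R by rewrite (ler_nat R 2 k).
    have hs : 0 <= sqrtD n k (0:R) by rewrite sqrtr_ge0.
    rewrite /munk /lambdank !mulr0 sub0r add0r.
    apply: ler_wpM2l; first by rewrite invr_ge0; lra.
    lra.
  move: key; rewrite /aq => hk; split; nra.
Qed.
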